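(* Let $F$ be a field, $\ell\le m$ positive integers, $V$ an $m$-dimensional $F$-vector space, and $E$ a close subspace of $\bigwedge^{\ell}V$ of dimension $r$. Then $E$ is decomposable. Moreover, if $\{\omega_1,\dots,\omega_r\}$ is a basis of $E$, then $V_E=V_{\omega_1}\cap\cdots\cap V_{\omega_r}$ and $V^E=V_{\omega_1}+\cdots+V_{\omega_r}$. Further, if $r>1$, then $\dim V_E=\ell-1$ and $\dim V^E=\ell+r-1$ if $E$ is close of type I, whereas $\dim V_E=\ell-r+1$ and $\dim V^E=\ell+1$ if $E$ is close of type II.
   Context: For $\omega\in\bigwedge^{\ell}V$, $V_\omega=\{v\in V: v\wedge\omega=0\}$. For a subspace $E$ of $\bigwedge^{\ell}V$, $V_E=\bigcap_{\omega\in E}V_\omega$ and $V^E=\sum_{0\ne\omega\in E}V_\omega$. A nonzero $\omega$ is decomposable if $\omega=v_1\wedge\cdots\wedge v_\ell$ with $v_i\in V$; a subspace is decomposable if all nonzero elements are. With $r=\dim E$: $E$ is close of type I if there are linearly independent $f_1,\dots,f_{\ell-1},g_1,\dots,g_r\in V$ with $E=\mathrm{span}\{f_1\wedge\cdots\wedge f_{\ell-1}\wedge g_i:1\le i\le r\}$; close of type II if there are linearly independent $u_1,\dots,u_{\ell-r+1},g_1,\dots,g_r\in V$ with $E=\mathrm{span}\{u_1\wedge\cdots\wedge u_{\ell-r+1}\wedge g_1\wedge\cdots\wedge\widehat{g_i}\wedge\cdots\wedge g_r:1\le i\le r\}$ ($\widehat{g_i}$ omitted); close if of type I or type II. *)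

(* Defs.v *)
(* Exterior algebra of V = 'rV[F]_m modelled concretely in the
   standard basis e_S (S a subset of 'I_m, e_S = e_{s1} /\ ... /\ e_{sk},
   s1 < ... < sk). *)
From HB Require Import structures.
From mathcomp Require Import all_boot all_order all_algebra.
From mathcomp Require Import ring.
Set Implicit Arguments. Unset Strict Implicit. Unset Printing Implicit Defensive.
Import Order.TTheory GRing.Theory.
Local Open Scope ring_scope.

Section Exterior.
Variables (F : fieldType) (m : nat).

Definition ext := {ffun {set 'I_m} -> F^o}.

Definition ebasis (X : {set 'I_m}) : ext := [ffun T => (T == X)%:R].

Definition ext1 : ext := ebasis set0.

(* left multiplication by a vector:  v /\ w, using
   e_i /\ e_T = (-1)^#{j in T | j < i} e_(T u {i}) if i \notin T, 0 otherwise *)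
Definition wedgev (v : 'rV[F]_m) (w : ext) : ext :=
  [ffun X : {set 'I_m} =>
     \sum_(i in X) (-1) ^+ #|[set j in X | (j < i)%N]| * v 0 i * w (X :\ i)].

Definition wedges (vs : seq 'rV[F]_m) : ext := foldr wedgev ext1 vs.

Definition extpow (l : nat) : {vspace ext} :=
  <<[seq ebasis X | X <- enum [set X : {set 'I_m} | #|X| == l]]>>%VS.

Definition wedgevr (w : ext) (v : 'rV[F]_m) : ext := wedgev v w.

Lemma wedgev_is_linear (w : ext) : linear (wedgevr w).
Proof.
move=> a u v; apply/ffunP => X; rewrite !ffunE.
rewrite scaler_sumr -big_split /=; apply: eq_bigr => i _; rewrite !mxE.
rewrite [a *: _]/GRing.scale /=; ring.
Qed.

HB.instance Definition _ (w : ext) :=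
  GRing.isLinear.Build F 'rV[F]_m ext _ (wedgevr w) (wedgev_is_linear w).

Definition Vw (w : ext) : {vspace 'rV[F]_m} := lker (linfun (wedgevr w)).

Lemma memVw (w : ext) (v : 'rV[F]_m) : (v \in Vw w) = (wedgev v w == 0).
Proof.
rewrite /Vw memv_ker lfunE //=.
Qed.

Definition in_VE (E : {vspace ext}) (v : 'rV[F]_m) : Prop :=
  forall w, w \in E -> v \in Vw w.

(* V^E = sum of the V_w, 0 <> w in E : the elements of V that are finite sums
   of elements of such V_w *)
Definition in_VuE (E : {vspace ext}) (v : 'rV[F]_m) : Prop :=
  exists ws : seq ext, all (fun w => (w \in E) && (w != 0)) ws /\
                       v \in (\sum_(w <- ws) Vw w)%VS.

Definition decomposable_elt (l : nat) (w : ext) : Prop :=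
  exists vs : seq 'rV[F]_m, size vs = l /\ w = wedges vs.

Definition decomposable_sub (l : nat) (E : {vspace ext}) : Prop :=
  forall w, w \in E -> w != 0 -> decomposable_elt l w.

Definition closeI (l : nat) (E : {vspace ext}) : Prop :=
  exists fs gs : seq 'rV[F]_m,
    [/\ (size fs).+1 = l, size gs = \dim E, free (fs ++ gs) &
        E = <<[seq wedges (rcons fs g) | g <- gs]>>%VS].

(* close of type II (r = dim E):
   E = span{ u1/\.../\u_(l-r+1)/\g1/\..^gi../\gr } *)
Definition closeII (l : nat) (E : {vspace ext}) : Prop :=
  exists us gs : seq 'rV[F]_m,
    [/\ size us + \dim E = l.+1, size gs = \dim E, free (us ++ gs) &
        E = <<[seq wedges (us ++ (take i gs ++ drop i.+1 gs))
              | i <- iota 0 (\dim E)]>>%VS].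

Definition close (l : nat) (E : {vspace ext}) : Prop := closeI l E \/ closeII l E.

End Exterior.

(* Main.v *)
Require Import Defs.
From HB Require Import structures.
From mathcomp Require Import all_boot all_order all_algebra.
From mathcomp Require Import ring zify.
Set Implicit Arguments. Unset Strict Implicit. Unset Printing Implicit Defensive.
Import GRing.Theory.
Local Open Scope ring_scope.

Section S1.
Variables (F : fieldType) (m : nat).
Local Notation ext := (ext F m).
Local Notation V := 'rV[F]_m.

Lemma wedgev_lin (v : V) (a : F) (w1 w2 : ext) :
  wedgev v (a *: w1 + w2) = a *: wedgev v w1 + wedgev v w2.
Proof.
apply/ffunP => X; rewrite !ffunE scaler_sumr -big_split /=.
apply: eq_bigr => i _; rewrite !ffunE.
rewrite [a *: _]/GRing.scale /= [a *: _]/GRing.scale /=; ring.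
Qed.

Lemma wedgevD (v : V) (w1 w2 : ext) :
  wedgev v (w1 + w2) = wedgev v w1 + wedgev v w2.
Proof. by have := wedgev_lin v 1 w1 w2; rewrite !scale1r. Qed.

Lemma wedgev0 (v : V) : wedgev v 0 = 0.
Proof. by apply/ffunP => X; rewrite !ffunE big1 // => i _; rewrite ffunE mulr0. Qed.

Lemma wedgevZ (v : V) (a : F) (w : ext) : wedgev v (a *: w) = a *: wedgev v w.
Proof. by rewrite -[a *: w]addr0 wedgev_lin wedgev0 addr0. Qed.

Lemma wedgevN (v : V) (w : ext) : wedgev v (- w) = - wedgev v w.
Proof. by rewrite -scaleN1r wedgevZ scaleN1r. Qed.

Lemma wedgevB (v : V) (w1 w2 : ext) :
  wedgev v (w1 - w2) = wedgev v w1 - wedgev v w2.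
Proof. by rewrite wedgevD wedgevN. Qed.

Lemma wedgev_sum (v : V) I (r : seq I) (P : pred I) (f : I -> ext) :
  wedgev v (\sum_(i <- r | P i) f i) = \sum_(i <- r | P i) wedgev v (f i).
Proof.
exact: (big_morph (wedgev v) (wedgevD v) (wedgev0 v)).
Qed.

Lemma wedgevlD (u v : V) (w : ext) :
  wedgev (u + v) w = wedgev u w + wedgev v w.
Proof. exact: (linearD (wedgevr w)). Qed.

Lemma wedgevlZ (a : F) (v : V) (w : ext) :
  wedgev (a *: v) w = a *: wedgev v w.
Proof. by rewrite -[LHS]/(wedgevr w (a *: v)) linearZ. Qed.

Lemma wedgevl0 (w : ext) : wedgev 0 w = 0.
Proof. exact: (linear0 (wedgevr w)). Qed.

Lemma wedgevlN (v : V) (w : ext) : wedgev (- v) w = - wedgev v w.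
Proof. exact: (linearN (wedgevr w)). Qed.

Lemma wedgevl_sum (w : ext) I (r : seq I) (P : pred I) (f : I -> V) :
  wedgev (\sum_(i <- r | P i) f i) w = \sum_(i <- r | P i) wedgev (f i) w.
Proof. exact: (linear_sum (wedgevr w)). Qed.

End S1.

Section S2.
Variables (F : fieldType) (m : nat).
Local Notation ext := (ext F m).
Local Notation V := 'rV[F]_m.

Definition sg (X : {set 'I_m}) (i : 'I_m) : F := (-1) ^+ #|[set j in X | (j < i)%N]|.

Lemma sg_rem_gt (X : {set 'I_m}) (i k : 'I_m) : (k < i)%N ->
  sg (X :\ i) k = sg X k.
Proof.
move=> ki; rewrite /sg (_ : [set j in X :\ i | (j < k)%N] = [set j in X | (j < k)%N]) //.
apply/setP => j; rewrite !inE.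
case: (ltnP j k) => jk; rewrite ?andbF ?andbT //.
have : j != i by apply/eqP => eji; move: jk ki; rewrite eji => a b; have := ltn_trans a b; rewrite ltnn.
by move=> ->.
Qed.

Lemma sg_rem_lt (X : {set 'I_m}) (i k : 'I_m) : (k < i)%N -> k \in X ->
  sg (X :\ k) i = - sg X i.
Proof.
move=> ki kX; rewrite /sg.
have -> : [set j in X | (j < i)%N] = k |: [set j in X :\ k | (j < i)%N].
  apply/setP => j; rewrite !inE; case: (eqVneq j k) => [->|] /=; by rewrite ?kX ?ki.
by rewrite cardsU1 !inE eqxx /= add1n exprS mulN1r opprK.
Qed.

Lemma wedgevv (v : V) (w : ext) : wedgev v (wedgev v w) = 0.
Proof.
apply/ffunP => X; rewrite !ffunE.
pose G i k := sg X i * v 0 i * (sg (X :\ i) k * v 0 k * w (X :\ i :\ k)).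
transitivity (\sum_(i in X) \sum_(k in X | k != i) G i k).
  apply: eq_bigr => i Xi; rewrite ffunE mulr_sumr; apply: eq_big => [k|k _].
    by rewrite in_setD1 andbC.
  by rewrite /G /sg.
have split1 : forall i, \sum_(k in X | k != i) G i k =
   \sum_(k in X | (k < i)%N) G i k + \sum_(k in X | (i < k)%N) G i k.
  move=> i; rewrite (bigID (fun k : 'I_m => (k < i)%N)) /=; congr (_ + _).
    apply: eq_bigl => k; case: (k \in X) => //=.
    case: (ltngtP k i) => ki; rewrite ?andbF ?andbT //.
    by apply: contraTneq ki => ->; rewrite ltnn.
  apply: eq_bigl => k; case: (k \in X) => //=.
  case: (ltngtP k i) => ki; rewrite ?andbF ?andbT //=.
    by apply: contraTneq ki => ->; rewrite ltnn.
  by rewrite (val_inj ki) eqxx.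
rewrite (eq_bigr _ (fun i _ => split1 i)) big_split /=.
rewrite (exchange_big_dep (fun k => k \in X)) /=; last by move=> i k _ /andP[].
rewrite -big_split /= big1 // => j Xj.
rewrite (eq_bigl (fun i => (i \in X) && (j < i)%N)) => [|i]; last by rewrite Xj.
rewrite -big_split /= big1 // => k /andP[Xk jk].
rewrite /G (sg_rem_gt X jk) (sg_rem_lt jk Xj).
rewrite (_ : X :\ k :\ j = X :\ j :\ k); last by rewrite !setDDl setUC.
ring.
Qed.
End S2.

Section S3.
Variables (F : fieldType) (m : nat).
Local Notation ext := (ext F m).
Local Notation V := 'rV[F]_m.

Lemma wedgev_anti (u v : V) (w : ext) :
  wedgev u (wedgev v w) = - wedgev v (wedgev u w).
Proof.
have := wedgevv (u + v) w.
rewrite !wedgevlD !wedgevD !wedgevv add0r addr0 => /eqP.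
by rewrite addr_eq0 => /eqP.
Qed.

Definition Pf (s : seq V) (x : ext) : ext := foldr (@wedgev F m) x s.

Lemma wedges_cat (s1 s2 : seq V) : wedges (s1 ++ s2) = Pf s1 (wedges s2).
Proof. by rewrite /wedges foldr_cat. Qed.

Lemma Pf_lin s a x y : Pf s (a *: x + y) = a *: Pf s x + Pf s y.
Proof. by elim: s => [|u s IH] //=; rewrite IH wedgev_lin. Qed.

Lemma Pf0 s : Pf s 0 = 0.
Proof. by elim: s => [|u s IH] //=; rewrite IH wedgev0. Qed.

Lemma PfZ s a x : Pf s (a *: x) = a *: Pf s x.
Proof. by rewrite -[a *: x]addr0 Pf_lin Pf0 addr0. Qed.

Lemma PfD s x y : Pf s (x + y) = Pf s x + Pf s y.
Proof. by have := Pf_lin s 1 x y; rewrite !scale1r. Qed.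

Lemma Pf_sum s I (r : seq I) (P : pred I) (f : I -> ext) :
  Pf s (\sum_(i <- r | P i) f i) = \sum_(i <- r | P i) Pf s (f i).
Proof. exact: (big_morph (Pf s) (PfD s) (Pf0 s)). Qed.

Lemma wedges_cons (v : V) s : wedges (v :: s) = wedgev v (wedges s).
Proof. by []. Qed.

Lemma wedges_span0 (s : seq V) (v : V) : v \in <<s>>%VS -> wedgev v (wedges s) = 0.
Proof.
elim: s v => [|a s IH] v.
  by rewrite span_nil memv0 => /eqP ->; rewrite wedgevl0.
rewrite span_cons => /memv_addP [y /vlineP [c ->] [z zs ->]].
rewrite wedgevlD wedgevlZ wedges_cons wedgevv scaler0 add0r.
by rewrite wedgev_anti IH // wedgev0 oppr0.
Qed.

Lemma wedges_nfree (s : seq V) : ~~ free s -> wedges s = 0.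
Proof.
elim: s => [|a s IH]; first by rewrite nil_free.
rewrite free_cons negb_and negbK => /orP [as_|nf].
  by rewrite wedges_cons wedges_span0.
by rewrite wedges_cons IH // wedgev0.
Qed.

Lemma wedgesZ (a : F) (v : V) s : wedges ((a *: v) :: s) = a *: wedges (v :: s).
Proof. by rewrite !wedges_cons wedgevlZ. Qed.

Lemma wedges_move (s : seq V) (a : V) : a \in s ->
  exists rest, perm_eq s (a :: rest) /\
    (wedges s = wedges (a :: rest) \/ wedges s = - wedges (a :: rest)).
Proof.
elim: s => [|x s IH] //; rewrite inE; case: (eqVneq a x) => [->|nax] /= ins.
  by exists s; split; [exact: perm_refl| left].
have [rest [pe eqs]] := IH ins.
exists (x :: rest); split.
  apply: (perm_trans (y := x :: a :: rest)); first by rewrite perm_cons.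
  by apply/permP => p /=; rewrite addnCA.
rewrite !wedges_cons wedgev_anti.
case: eqs => ->; rewrite wedges_cons ?wedgevN; [right|left] => //.
by rewrite opprK.
Qed.

End S3.

Section S4.
Variables (F : fieldType) (m : nat).
Local Notation ext := (ext F m).
Local Notation V := 'rV[F]_m.

Lemma span_cons_dec (b c : V) (s : seq V) : c \in <<b :: s>>%VS ->
  exists2 g : F, exists2 z, z \in <<s>>%VS & c = g *: b + z & True.
Proof.
by rewrite span_cons => /memv_addP [y /vlineP [g ->] [z zs ->]]; exists g => //; exists z.
Qed.

Lemma elim_lemma (b p : V) (bs' : seq V) : p - b \in <<bs'>>%VS ->
  forall cs, all (fun c => c \in <<b :: bs'>>%VS) cs ->
  exists cs', [/\ size cs' = size cs, all (fun c => c \in <<bs'>>%VS) cs' &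
     wedgev p (wedges cs) = wedgev p (wedges cs')].
Proof.
move=> pb; elim => [|c cs IH] /=; first by exists [::].
case/andP => cin /IH [cs' [sz alls eqw]].
have [g [z zin ->] _] := span_cons_dec cin.
exists ((z - g *: (p - b)) :: cs'); split => /=; first by rewrite sz.
  by rewrite alls andbT memvB // memvZ.
rewrite wedgev_anti eqw -wedgev_anti.
have -> : g *: b + z = g *: p + (z - g *: (p - b)).
  by rewrite scalerBr opprB [z + _]addrC addrCA addrA subrK.
by rewrite wedgevlD wedgevlZ wedgevD wedgevZ wedgevv scaler0 add0r.
Qed.

Lemma free_size (s : seq V) : free s -> \dim <<s>> = size s.
Proof. by rewrite /free => /eqP. Qed.

Lemma wedges_prop (bs as_ : seq V) : size as_ = size bs ->
  all (fun a => a \in <<bs>>%VS) as_ -> exists c : F, wedges as_ = c *: wedges bs.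
Proof.
elim: bs as_ => [|b bs' IH] as_.
  by case: as_ => // _ _; exists 1; rewrite scale1r.
move=> sz alls.
case: (boolP (has (fun a => a \notin <<bs'>>%VS) as_)) => [/hasP [a ain anot] | hn].
  have [g [z zin aeq] _] := span_cons_dec (allP alls a ain).
  have g0 : g != 0.
    by apply: contraNneq anot => g0; rewrite aeq g0 scale0r add0r.
  have [rest [pe sgn]] := wedges_move ain.
  have allr : all (fun c => c \in <<b :: bs'>>%VS) rest.
    by apply/allP => c cr; apply: (allP alls); rewrite (perm_mem pe) inE cr orbT.
  have pb : g^-1 *: a - b \in <<bs'>>%VS.
    by rewrite aeq scalerDr scalerA mulVf // scale1r addrC addKr memvZ.
  have [cs' [sz' alls' eqw]] := elim_lemma pb allr.
  have szr : size cs' = size bs'.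
    by rewrite sz'; move: sz; rewrite (perm_size pe) /= => -[].
  have [mu eqmu] := IH cs' szr alls'.
  have key : wedges (a :: rest) = (g * mu) *: wedges (b :: bs').
    have -> : a = g *: (g^-1 *: a) by rewrite scalerA divff // scale1r.
    rewrite wedgesZ wedges_cons eqw eqmu wedgevZ.
    have -> : g^-1 *: a = b + (g^-1 *: a - b) by rewrite addrC subrK.
    by rewrite wedgevlD (wedges_span0 pb) addr0 scalerA.
  case: sgn => ->; first by exists (g * mu).
  by exists (- (g * mu)); rewrite key scaleNr.
exists 0; rewrite scale0r; apply: wedges_nfree; apply/negP => fr.
have : (\dim <<as_>> <= \dim <<bs'>>)%N.
  apply: dimvS; apply/span_subvP => a ain.
  by move: hn => /hasPn /(_ a ain); rewrite negbK.
rewrite free_size // sz /= => /leq_trans /(_ (dim_span bs')).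
by rewrite ltnn.
Qed.

End S4.

Section S5.
Variables (F : fieldType) (m : nat).
Local Notation ext := (ext F m).
Local Notation V := 'rV[F]_m.

Definition estd (k : nat) : V := \row_(j < m) ((j : nat) == k)%:R.

Lemma wedgev_estd (k : nat) : (k < m)%N ->
  wedgev (estd k) (ebasis F [set j : 'I_m | (k < j)%N]) =
  ebasis F [set j : 'I_m | (k <= j)%N].
Proof.
move=> km; pose ko := Ordinal km.
apply/ffunP => X; rewrite !ffunE.
case: (boolP (ko \in X)) => koX.
  rewrite (bigD1 ko) //= big1 ?addr0; last first.
    move=> i /andP [_ iko]; rewrite !mxE.
    have -> : ((i : nat) == k) = false.
      by apply/negP => /eqP ik; move: iko; rewrite (_ : i = ko) ?eqxx //; apply: val_inj.
    by rewrite mulr0 mul0r.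
  rewrite !mxE ffunE eqxx mulr1.
  have eqv : (X :\ ko == [set j : 'I_m | (k < j)%N]) = (X == [set j : 'I_m | (k <= j)%N]).
    apply/eqP/eqP => [h|->].
      apply/setP => j; case: (eqVneq j ko) => [->|jk].
        by rewrite koX inE leqnn.
      move/setP: h => /(_ j); rewrite !inE jk /= => ->.
      rewrite [(k <= j)%N]leq_eqVlt (_ : (k == j :> nat) = false) //.
      by apply/negP => /eqP e; move: jk; rewrite (_ : j = ko) ?eqxx //; apply: val_inj.
    apply/setP => j; rewrite !inE; case: (eqVneq j ko) => [->|jk] /=.
      by rewrite ltnn.
    rewrite [(k <= j)%N]leq_eqVlt (_ : (k == j :> nat) = false) //.
    by apply/negP => /eqP e; move: jk; rewrite (_ : j = ko) ?eqxx //; apply: val_inj.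
  rewrite eqv; case: (eqVneq X [set j : 'I_m | (k <= j)%N]) => [eX|]; last by rewrite mulr0.
  rewrite mulr1 /= (_ : [set j in X | (j < ko)%N] = set0) ?cards0 ?expr0 //.
  apply/setP => j; rewrite eX !inE; apply/negP => /andP [a b].
  by move: (leq_trans b a); rewrite ltnn.
rewrite big1; last first.
  move=> i iX; rewrite !mxE.
  have -> : ((i : nat) == k) = false.
    by apply/negP => /eqP ik; move: iX; rewrite (_ : i = ko) ?(negbTE koX) //; apply: val_inj.
  by rewrite mulr0 mul0r.
case: (eqVneq X [set j : 'I_m | (k <= j)%N]) => // eX.
by move: koX; rewrite eX inE leqnn.
Qed.

Lemma wedges_estd (n k : nat) : (k + n = m)%N ->
  wedges [seq estd j | j <- iota k n] = ebasis F [set j : 'I_m | (k <= j)%N].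
Proof.
elim: n k => [|n IH] k.
  rewrite addn0 => km /=; rewrite /ext1; congr (ebasis F _).
  by apply/setP => j; rewrite !inE km leqNgt ltn_ord.
move=> kn /=; rewrite IH ?addSnnS // wedgev_estd //.
by rewrite -kn -addSnnS leq_addr.
Qed.

Lemma ebasis_neq0 (X : {set 'I_m}) : ebasis F X != 0.
Proof.
by apply/eqP => /ffunP /(_ X); rewrite !ffunE eqxx => /eqP; rewrite oner_eq0.
Qed.

Lemma wedges_free_neq0 (s : seq V) : free s -> wedges s != 0.
Proof.
move=> fs; apply/negP => /eqP ws0.
pose U := <<s>>%VS.
pose t := (vbasis (U^C)%VS : seq V) ++ s.
have spt : <<t>>%VS = fullv.
  rewrite span_cat (span_basis (vbasisP _)) addvC addv_complf //.
have szt : size t = m.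
  have dimf : \dim (fullv : {vspace V}) = m by rewrite dimvf /dim /= mul1n.
  rewrite size_cat size_tuple dimv_compl dimf -(free_size fs) subnK //.
  by rewrite -[X in (_ <= X)%N]dimf; apply: dimvS; apply: subvf.
have sz1 : size [seq estd j | j <- iota 0 m] = size t by rewrite size_map size_iota.
have al1 : all (fun a => a \in <<t>>%VS) [seq estd j | j <- iota 0 m].
  by apply/allP => x _; rewrite spt memvf.
have [c ec] := wedges_prop sz1 al1.
have := ebasis_neq0 [set j : 'I_m | (0 <= j)%N].
by rewrite -(@wedges_estd m 0) // ec /t wedges_cat ws0 Pf0 scaler0 eqxx.
Qed.

Lemma memVw_free (s : seq V) (v : V) : free s -> (v \in Vw (wedges s)) = (v \in <<s>>%VS).
Proof.
move=> fs; rewrite memVw; case: (boolP (v \in <<s>>%VS)) => vs.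
  by rewrite wedges_span0 // eqxx.
apply/negbTE; rewrite -wedges_cons; apply: wedges_free_neq0.
by rewrite free_cons vs.
Qed.

Lemma Vw_free (s : seq V) : free s -> Vw (wedges s) = <<s>>%VS.
Proof. by move=> fs; apply/vspaceP => v; rewrite memVw_free. Qed.

End S5.

Section S6.
Variables (F : fieldType) (m : nat).
Local Notation ext := (ext F m).
Local Notation V := 'rV[F]_m.

Lemma memv_bigcap_seq (ws : seq ext) (v : V) :
  (v \in (\bigcap_(w <- ws) Vw w)%VS) = all (fun w => v \in Vw w) ws.
Proof.
elim: ws => [|w ws IH]; first by rewrite big_nil memvf.
by rewrite big_cons memv_cap IH.
Qed.

Lemma sumv_seq_sub (ws : seq ext) (U : {vspace V}) :
  ((\sum_(w <- ws) Vw w)%VS <= U)%VS = all (fun w => Vw w <= U)%VS ws.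
Proof.
elim: ws => [|w ws IH]; first by rewrite big_nil sub0v.
by rewrite big_cons subv_add IH.
Qed.

Lemma sub_sumv_seq (ws : seq ext) w : w \in ws -> (Vw w <= \sum_(w <- ws) Vw w)%VS.
Proof.
elim: ws => [|x ws IH] //; rewrite inE big_cons => /orP [/eqP ->|wi].
  exact: addvSl.
by apply: subv_trans (IH wi) _; apply: addvSr.
Qed.

Lemma sumv_seq_ord (ws : seq ext) :
  (\sum_(w <- ws) Vw w)%VS = (\sum_(i < size ws) Vw ws`_i)%VS.
Proof. by rewrite (big_nth 0) big_mkord. Qed.

Lemma VwZ (c : F) (w : ext) : c != 0 -> Vw (c *: w) = Vw w.
Proof.
move=> c0; apply/vspaceP => v; rewrite !memVw wedgevZ scaler_eq0.
by rewrite (negbTE c0).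
Qed.

Lemma in_VE_basis (E : {vspace ext}) ws (v : V) : basis_of E ws ->
  (in_VE E v <-> v \in (\bigcap_(w <- ws) Vw w)%VS).
Proof.
move=> bws; rewrite memv_bigcap_seq; split.
  move=> h; apply/allP => w wi; apply: h.
  by rewrite -(span_basis bws); apply: memv_span.
move=> /allP h w wE; rewrite memVw.
rewrite (coord_basis (X := in_tuple ws) bws wE) wedgev_sum big1 // => i _.
rewrite wedgevZ; have := h (ws`_i) (mem_nth 0 (ltn_ord i)).
by rewrite memVw => /eqP ->; rewrite scaler0.
Qed.

Lemma in_VuE_basis (E : {vspace ext}) ws (v : V) : basis_of E ws ->
  (forall w, w \in E -> w != 0 -> (Vw w <= \sum_(w <- ws) Vw w)%VS) ->
  (in_VuE E v <-> v \in (\sum_(w <- ws) Vw w)%VS).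
Proof.
move=> bws key; split.
  case=> ws' [/allP al vin].
  suff sub : ((\sum_(w <- ws') Vw w)%VS <= \sum_(w <- ws) Vw w)%VS by move/subvP: sub => /(_ v vin).
  rewrite sumv_seq_sub; apply/allP => w wi.
  by case/andP: (al w wi) => wE w0; apply: key.
move=> vin; exists ws; split => //; apply/allP => w wi.
rewrite -(span_basis bws) memv_span //=.
by apply: free_not0 wi; apply: basis_free bws.
Qed.

Lemma span_map_lin (f : V -> ext)
  (flin : forall a x y, f (a *: x + y) = a *: f x + f y) (gs : seq V) w :
  w \in <<map f gs>>%VS -> exists2 h, h \in <<gs>>%VS & w = f h.
Proof.
have f0 : f 0 = 0.
  by have := flin (-1) 0 0; rewrite scaler0 addr0 scaleN1r addNr.
elim: gs w => [|g gs IH] w /=.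
  by rewrite span_nil memv0 => /eqP ->; exists 0; rewrite ?mem0v.
rewrite span_cons => /memv_addP [y /vlineP [c ->] [z /IH [h hin ->] ->]].
exists (c *: g + h); last by rewrite flin.
by rewrite span_cons memv_add // memvZ // memv_line.
Qed.

End S6.

Section S7.
Variables (F : fieldType) (m : nat).
Local Notation ext := (ext F m).
Local Notation V := 'rV[F]_m.

Lemma free_drop_mid (us pre post : seq V) : free (us ++ pre ++ post) -> free (us ++ post).
Proof.
have pe : perm_eq (us ++ pre ++ post) (pre ++ (us ++ post)).
  by apply/permP => p; rewrite !count_cat; lia.
by rewrite (perm_free pe) => /catr_free.
Qed.

Lemma free_drop_g (us pre : seq V) g post :
  free (us ++ pre ++ g :: post) -> free (us ++ pre ++ post).
Proof.
have pe : perm_eq (us ++ pre ++ g :: post) (g :: (us ++ pre ++ post)).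
  by apply/permP => p; rewrite /= !count_cat /=; lia.
by rewrite (perm_free pe) free_cons => /andP [].
Qed.

Lemma cap_lemma (us pre : seq V) g post : free (us ++ pre ++ g :: post) ->
  (<<us ++ g :: post>> :&: <<us ++ pre ++ post>> <= <<us ++ post>>)%VS.
Proof.
move=> fr.
have fA : free (us ++ g :: post) by apply: free_drop_mid fr.
have fB : free (us ++ pre ++ post) by apply: free_drop_g fr.
have fC : free (us ++ post) by apply: free_drop_mid fB.
set A := <<us ++ g :: post>>%VS; set B := <<us ++ pre ++ post>>%VS.
set C := <<us ++ post>>%VS.
have CAB : (C <= A :&: B)%VS.
  rewrite subv_cap; apply/andP; split; apply: sub_span => x;
  rewrite !mem_cat ?inE => /orP [->|->] //; rewrite ?orbT //.
have sAB : (<<us ++ pre ++ g :: post>> <= A + B)%VS.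
  apply/span_subvP => x; rewrite !mem_cat inE.
  case/or3P => [xu|xp|/orP [xg|xpo]].
  - by apply: subv_trans (addvSl A B); apply: memv_span; rewrite mem_cat xu.
  - by apply: subvP (addvSr A B) _ _; apply: memv_span; rewrite !mem_cat xp orbT.
  - by apply: subvP (addvSl A B) _ _; apply: memv_span; rewrite mem_cat inE xg orbT.
  - by apply: subvP (addvSl A B) _ _; apply: memv_span; rewrite mem_cat inE xpo !orbT.
have d1 := dimvS sAB.
have d2 := dimv_sum_cap A B.
have eA : \dim A = size (us ++ g :: post) by apply: free_size.
have eB : \dim B = size (us ++ pre ++ post) by apply: free_size.
have eC : \dim C = size (us ++ post) by apply: free_size.
have eS : \dim <<us ++ pre ++ g :: post>> = size (us ++ pre ++ g :: post) by apply: free_size.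
rewrite eS in d1; rewrite eA eB in d2.
have dle : (\dim (A :&: B) <= \dim C)%N.
  by rewrite eC; move: d1 d2; rewrite !size_cat /=; lia.
 have : (A :&: B == C)%VS by rewrite eq_sym eqEdim CAB dle.
by move/eqP ->.
Qed.

Definition dform (l : nat) (w : ext) (a : seq V) (c : F) :=
  [/\ size a = l, free a, c != 0 & w = c *: wedges a].

Lemma dform_dec l w a c : (0 < l)%N -> dform l w a c -> decomposable_elt l w.
Proof.
move=> lp [sz fa c0 ->]; case: a sz fa => [|y rest] sz fa; first by rewrite -sz in lp.
by exists ((c *: y) :: rest); split => //; rewrite wedgesZ.
Qed.

Lemma dform_Vw l w a c : dform l w a c -> Vw w = <<a>>%VS.
Proof. by move=> [sz fa c0 ->]; rewrite VwZ // Vw_free. Qed.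

End S7.

Section S8.
Variables (F : fieldType) (m : nat).
Local Notation ext := (ext F m).
Local Notation V := 'rV[F]_m.
Variables (fs gs : seq V).
Hypothesis frI : free (fs ++ gs).

Definition WI (g : V) : ext := wedges (rcons fs g).

Lemma WI_eq g : WI g = Pf fs (wedgev g (ext1 F m)).
Proof. by rewrite /WI -cats1 wedges_cat. Qed.

Lemma WI_lin a x y : WI (a *: x + y) = a *: WI x + WI y.
Proof. by rewrite !WI_eq wedgevlD wedgevlZ Pf_lin. Qed.

Lemma WI0 : WI 0 = 0.
Proof. by rewrite WI_eq wedgevl0 Pf0. Qed.

Lemma WIB x y : WI (x - y) = WI x - WI y.
Proof. by rewrite -scaleN1r addrC WI_lin scaleN1r addrC. Qed.

Lemma WI_sum n (c : 'I_n -> F) (f : 'I_n -> V) :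
  WI (\sum_i c i *: f i) = \sum_i c i *: WI (f i).
Proof.
have WID : forall x y, WI (x + y) = WI x + WI y.
  by move=> x y; have := WI_lin 1 x y; rewrite !scale1r.
rewrite (big_morph WI WID WI0); apply: eq_bigr => i _.
by rewrite -[c i *: f i]addr0 WI_lin WI0 addr0.
Qed.

Lemma WI_free h : h \in <<gs>>%VS -> h != 0 -> free (rcons fs h).
Proof.
move=> hg h0.
have pe : perm_eq (rcons fs h) (h :: fs).
  by apply/permP => p; rewrite -cats1 count_cat /=; lia.
rewrite (perm_free pe) free_cons.
move: frI; rewrite cat_free => /and3P [ffs _ /directv_addP cap0].
rewrite ffs andbT; apply/negP => hf.
have : h \in (<<fs>> :&: <<gs>>)%VS by rewrite memv_cap hf hg.
by rewrite cap0 memv0 (negbTE h0).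
Qed.

Lemma WI_inj h : h \in <<gs>>%VS -> WI h = 0 -> h = 0.
Proof.
move=> hg W0; apply/eqP; apply/negPn/negP => h0.
by have := wedges_free_neq0 (WI_free hg h0); rewrite -/(WI h) W0 eqxx.
Qed.

Lemma mem_rcons_Vw h x : x \in <<rcons fs h>>%VS -> x \in Vw (WI h).
Proof. by move=> xi; rewrite memVw wedges_span0. Qed.

Lemma span_rcons_sub h : h \in <<gs>>%VS -> (<<rcons fs h>> <= <<fs ++ gs>>)%VS.
Proof.
move=> hg; apply/span_subvP => x; rewrite -cats1 mem_cat inE => /orP [xf|/eqP ->].
  by apply: memv_span; rewrite mem_cat xf.
by apply: subvP hg; apply: sub_span => y yi; rewrite mem_cat yi orbT.
Qed.

Variables (l : nat) (E : {vspace ext}).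
Hypotheses (szf : (size fs).+1 = l) (defE : E = <<map WI gs>>%VS).

Lemma typeI_elt w : w \in E -> exists2 h, h \in <<gs>>%VS & w = WI h.
Proof. by rewrite defE; apply: span_map_lin; apply: WI_lin. Qed.

Lemma typeI_form w : w \in E -> w != 0 ->
  exists2 h, h \in <<gs>>%VS & dform l w (rcons fs h) 1.
Proof.
move=> wE w0; have [h hg wh] := typeI_elt wE.
have h0 : h != 0 by apply: contraNneq w0 => h0; rewrite wh h0 WI0.
exists h => //; split; rewrite ?size_rcons ?oner_eq0 ?scale1r //.
exact: WI_free.
Qed.

Lemma typeI_Vw_sub w : w \in E -> w != 0 -> (Vw w <= <<fs ++ gs>>)%VS.
Proof.
by move=> wE w0; have [h hg df] := typeI_form wE w0; rewrite (dform_Vw df) span_rcons_sub.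
Qed.

Lemma typeI_sum ws : basis_of E ws -> ws != [::] ->
  (\sum_(w <- ws) Vw w)%VS = <<fs ++ gs>>%VS.
Proof.
move=> bws wsn.
have wsE : forall w, w \in ws -> w \in E.
  by move=> w wi; rewrite -(span_basis bws) memv_span.
have ws0 : forall w, w \in ws -> w != 0.
  by move=> w wi; apply: free_not0 wi; apply: basis_free bws.
apply/eqP; rewrite eqEsubv; apply/andP; split.
  by rewrite sumv_seq_sub; apply/allP => w wi; apply: typeI_Vw_sub; auto.
apply/span_subvP => x; rewrite mem_cat => /orP [xf|xg].
  case: ws wsn bws wsE ws0 => // w0 ws _ bws wsE ws0.
  have [h0 _ eq0] := typeI_elt (wsE w0 (mem_head _ _)).
  apply: subvP (sub_sumv_seq (mem_head w0 ws)) _ _.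
  by rewrite eq0; apply: mem_rcons_Vw; apply: memv_span; rewrite -cats1 mem_cat xf.
have WxE : WI x \in E by rewrite defE; apply: memv_span; apply: map_f.
have ex : forall i : 'I_(size ws), exists h, h \in <<gs>>%VS /\ ws`_i = WI h.
  move=> i; have [h hg eqh] := typeI_elt (wsE _ (mem_nth 0 (ltn_ord i))).
  by exists h.
have [hf hfP] := fin_all_exists ex.
have eqW := coord_basis (X := in_tuple ws) bws WxE.
set c := fun i => coord (in_tuple ws) i (WI x) in eqW.
have xeq : x = \sum_i c i *: hf i.
  apply/eqP; rewrite -subr_eq0; apply/eqP; apply: WI_inj.
    rewrite memvB //; first by apply: memv_span.
    by apply: memv_suml => i _; apply: memvZ; case: (hfP i).
  rewrite WIB WI_sum {1}eqW; apply/eqP; rewrite subr_eq0; apply/eqP; apply: eq_bigr => i _.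
  by case: (hfP i) => _ <-.
rewrite sumv_seq_ord xeq; apply: memv_sumr => i _; apply: memvZ.
by case: (hfP i) => _ ->; apply: mem_rcons_Vw; apply: memv_span; rewrite mem_rcons mem_head.
Qed.

Lemma typeI_cap ws : basis_of E ws -> (1 < size gs)%N ->
  (\bigcap_(w <- ws) Vw w)%VS = <<fs>>%VS.
Proof.
move=> bws sg.
apply/eqP; rewrite eqEsubv; apply/andP; split; last first.
  apply/span_subvP => x xf; rewrite memv_bigcap_seq; apply/allP => w wi.
  have wE : w \in E by rewrite -(span_basis bws) memv_span.
  have [h _ ->] := typeI_elt wE.
  by apply: mem_rcons_Vw; apply: memv_span; rewrite -cats1 mem_cat xf.
case eg : gs sg => [|g1 [|g2 gs']] // _.
apply/subvP => v; rewrite -(in_VE_basis _ bws) => vE.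
have gsf : free gs by apply: catr_free frI.
have hv : forall g, g \in gs -> v \in <<rcons fs g>>%VS.
  move=> g gi.
  have gsp : g \in <<gs>>%VS by apply: memv_span.
  have g0 : g != 0 by apply: free_not0 gi.
  rewrite -(memVw_free v (WI_free gsp g0)); apply: vE.
  by rewrite defE; apply: memv_span; apply: map_f.
have f3 : free (fs ++ [:: g1] ++ g2 :: [::]).
  move: frI; rewrite eg -[g1 :: g2 :: gs']/([:: g1; g2] ++ gs') catA.
  by move/catl_free.
have := cap_lemma f3; rewrite !cats0 => /subvP; apply.
by rewrite memv_cap !cats1 !hv // eg !inE eqxx ?orbT.
Qed.

End S8.

Section S9.
Variables (F : fieldType) (m : nat).
Local Notation ext := (ext F m).
Local Notation V := 'rV[F]_m.

Definition hat (gs : seq V) (i : nat) := take i gs ++ drop i.+1 gs.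

Lemma dec_lemma (gs : seq V) (c : nat -> F) : exists x hs (lam : F),
  [/\ size hs = (size gs).-1, all (fun h => h \in <<gs>>%VS) hs, x \in <<gs>>%VS,
      \sum_(i < size gs) c i *: wedges (hat gs i) = lam *: wedges hs &
      (0 < size gs)%N -> wedges (x :: hs) = wedges gs].
Proof.
elim: gs c => [|g gs IH] c.
  exists 0, [::], 0; split => //; first exact: mem0v.
  by rewrite big_ord0 scale0r.
have [x' [hs' [lam' [sz' al' xin' eq' wx']]]] := IH (fun i => c i.+1).
have sub : (<<gs>> <= <<g :: gs>>)%VS by rewrite span_cons addvSr.
have gin : g \in <<g :: gs>>%VS by apply: memv_span; rewrite mem_head.
have S : \sum_(i < size gs) c (lift ord0 i) *: wedges (hat (g :: gs) (lift ord0 i))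
       = wedgev g (\sum_(i < size gs) c i.+1 *: wedges (hat gs i)).
  by rewrite wedgev_sum; apply: eq_bigr => i _; rewrite lift0 /hat /= wedgevZ.
rewrite /= big_ord_recl S eq' wedgevZ.
have -> : hat (g :: gs) (@ord0 (size gs)) = gs by rewrite /hat /= drop0.
case: (eqVneq lam' 0) => [->|l0].
  exists g, gs, (c 0); split => //.
  - by apply/allP => h hi; apply: memv_span; rewrite inE hi orbT.
  - by rewrite scale0r addr0.
have gsp : (0 < size gs)%N.
  rewrite lt0n; apply/negP => /eqP gs0.
  have hs0 : hs' = [::] by apply/size0nil; rewrite sz' gs0.
  move: eq'; rewrite big1 => [|i _]; last by have := ltn_ord i; rewrite {2}gs0.
  move/eqP; rewrite eq_sym scaler_eq0 (negbTE l0) hs0 /=.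
  by rewrite (negbTE (ebasis_neq0 _ _)).
have wx := wx' gsp.
set t := c 0 / lam'.
exists (- x'), ((g + t *: x') :: hs'), lam'; split.
- by rewrite /= sz' prednK.
- rewrite /= memvD ?memvZ //; last by apply: (subvP sub).
  by apply/allP => h hi; apply: (subvP sub); apply: (allP al').
- by rewrite memvN; apply: (subvP sub).
- rewrite !wedges_cons wedgevlD wedgevlZ -wx wedges_cons scalerDr scalerA.
  by rewrite /t mulrC divfK // addrC.
- move=> _; rewrite !wedges_cons wedgevlN wedgevlD wedgevlZ wedgevD wedgevZ wedgevv.
  by rewrite scaler0 addr0 wedgev_anti opprK -wedges_cons wx.
Qed.

End S9.

Section S10.
Variables (F : fieldType) (m : nat).
Local Notation ext := (ext F m).
Local Notation V := 'rV[F]_m.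

Lemma span_seq_coef (s : seq ext) w : w \in <<s>>%VS ->
  exists c : nat -> F, w = \sum_(i < size s) c i *: s`_i.
Proof.
elim: s w => [|x s IH] w.
  by rewrite span_nil memv0 => /eqP ->; exists (fun _ => 0); rewrite big_ord0.
rewrite span_cons => /memv_addP [y /vlineP [a ->] [z /IH [c ->] ->]].
exists (fun i => if i is j.+1 then c j else a).
by rewrite /= big_ord_recl /=; congr (_ + _); apply: eq_bigr => i _; rewrite lift0.
Qed.

Lemma key_single (E : {vspace ext}) ws : basis_of E ws -> size ws = 1%N ->
  forall w, w \in E -> w != 0 -> (Vw w <= \sum_(w <- ws) Vw w)%VS.
Proof.
case: ws => [|w0 [|]] // bws _ w.
rewrite -(span_basis bws) span_seq1 => /vlineP [c ->].
rewrite scaler_eq0 negb_or => /andP [c0 _].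
by rewrite VwZ // big_seq1.
Qed.

Lemma basis_size (E : {vspace ext}) ws : basis_of E ws -> size ws = \dim E.
Proof. by move=> bws; rewrite -(span_basis bws); move: (basis_free bws); rewrite /free => /eqP. Qed.

Variables (us gs : seq V).
Hypothesis frII : free (us ++ gs).
Variables (l : nat) (E : {vspace ext}).
Hypotheses (szu : (size us + size gs = l.+1)%N) (szg : size gs = \dim E)
  (defE : E = <<[seq wedges (us ++ hat gs i) | i <- iota 0 (size gs)]>>%VS).

Lemma typeII_repr w : w \in E -> exists c : nat -> F,
  w = Pf us (\sum_(i < size gs) c i *: wedges (hat gs i)).
Proof.
rewrite defE => /span_seq_coef [c ->]; exists c.
rewrite Pf_sum; rewrite size_map size_iota; apply: eq_bigr => i _.
rewrite PfZ -wedges_cat (nth_map 0%N) ?size_iota //.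
by rewrite nth_iota.
Qed.

Lemma typeII_form w : w \in E -> w != 0 ->
  exists hs lam, dform l w (us ++ hs) lam /\ all (fun h => h \in <<gs>>%VS) hs.
Proof.
move=> /typeII_repr [c ->] w0.
have [x [hs [lam [sz al xin eq wx]]]] := dec_lemma gs c.
exists hs, lam; split => //.
move: w0; rewrite eq PfZ -wedges_cat scaler_eq0 negb_or => /andP [l0 W0].
have fr : free (us ++ hs) by apply/negPn/negP => nf; move: W0; rewrite wedges_nfree ?eqxx.
split => //; rewrite size_cat sz.
case: (posnP (size gs)) => gp; last by move: szu; lia.
have : lam *: wedges hs = 0.
  by rewrite -eq big1 // => i _; have := ltn_ord i; rewrite {2}gp.
move/eqP; rewrite scaler_eq0 (negbTE l0) /= => /eqP Wh.
by move: W0; rewrite wedges_cat Wh Pf0 eqxx.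
Qed.

Lemma sub_span_cat_r (hs : seq V) : all (fun h => h \in <<gs>>%VS) hs ->
  (<<us ++ hs>> <= <<us ++ gs>>)%VS.
Proof.
move=> /allP al; apply/span_subvP => x; rewrite mem_cat => /orP [xu|xh].
  by apply: memv_span; rewrite mem_cat xu.
apply: subvP (al x xh); apply: sub_span => y yi; by rewrite mem_cat yi orbT.
Qed.

Lemma typeII_Vw_sub w : w \in E -> w != 0 -> (Vw w <= <<us ++ gs>>)%VS.
Proof.
move=> wE w0; have [hs [lam [df al]]] := typeII_form wE w0.
by rewrite (dform_Vw df) sub_span_cat_r.
Qed.

Lemma typeII_us_Vw w : w \in E -> (<<us>> <= Vw w)%VS.
Proof.
move=> wE; case: (eqVneq w 0) => [->|w0].
  by apply/subvP => x _; rewrite memVw wedgev0.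
have [hs [lam [df al]]] := typeII_form wE w0.
by rewrite (dform_Vw df); apply: sub_span => x xi; rewrite mem_cat xi.
Qed.

Lemma dim_amb : \dim <<us ++ gs>> = l.+1.
Proof. by rewrite free_size // size_cat. Qed.

Lemma typeII_sum ws : basis_of E ws -> (1 < size gs)%N ->
  (\sum_(w <- ws) Vw w)%VS = <<us ++ gs>>%VS.
Proof.
move=> bws sg.
have wsE : forall w, w \in ws -> w \in E.
  by move=> w wi; rewrite -(span_basis bws) memv_span.
have ws0 : forall w, w \in ws -> w != 0.
  by move=> w wi; apply: free_not0 wi; apply: basis_free bws.
apply/eqP; rewrite eqEsubv; apply/andP; split.
  by rewrite sumv_seq_sub; apply/allP => w wi; apply: typeII_Vw_sub; auto.
have szws := basis_size bws; rewrite -szg in szws.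
case: ws bws wsE ws0 szws => [|w0 [|w1 rest]] //=; first by move=> *; lia.
  by move=> *; lia.
move=> bws wsE ws0 _.
have [hs0 [lam0 [df0 al0]]] := typeII_form (wsE w0 (mem_head _ _)) (ws0 w0 (mem_head _ _)).
have w1i : w1 \in [:: w0, w1 & rest] by rewrite !inE eqxx orbT.
have [hs1 [lam1 [df1 al1]]] := typeII_form (wsE w1 w1i) (ws0 w1 w1i).
set a0 := us ++ hs0 in df0; set a1 := us ++ hs1 in df1.
have [sz0 fr0 l0 e0] := df0; have [sz1 fr1 l1 e1] := df1.
have neq : <<a0>>%VS != <<a1>>%VS.
  apply/negP => /eqP eqa.
  have al : all (fun a => a \in <<a1>>%VS) a0 by apply/allP => a ai; rewrite -eqa memv_span.
  have [mu emu] := wedges_prop (etrans sz0 (esym sz1)) al.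
  have := basis_free bws; rewrite free_cons => /andP [/negP nin _]; apply: nin.
  have -> : w0 = (lam0 * mu / lam1) *: w1.
    by rewrite e0 e1 emu !scalerA divfK.
  by rewrite memvZ // memv_span // mem_head.
have V0 : Vw w0 = <<a0>>%VS := dform_Vw df0.
have V1 : Vw w1 = <<a1>>%VS := dform_Vw df1.
have S0 : (<<a0>> <= <<us ++ gs>>)%VS by apply: sub_span_cat_r.
have S1 : (<<a1>> <= <<us ++ gs>>)%VS by apply: sub_span_cat_r.
have d0 : \dim <<a0>> = l by rewrite free_size.
have d1 : \dim <<a1>> = l by rewrite free_size.
have dS : (l < \dim (<<a0>> + <<a1>>))%N.
  rewrite ltnNge; apply/negP => dle.
  have e0' : (<<a0>> == <<a0>> + <<a1>>)%VS by rewrite eqEdim addvSl d0.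
  have e1' : (<<a1>> == <<a0>> + <<a1>>)%VS by rewrite eqEdim addvSr d1.
  by move/eqP: e1' (eqP e0') neq => <- ->; rewrite eqxx.
have eqS : (<<a0>> + <<a1>> == <<us ++ gs>>)%VS.
  by rewrite eqEdim subv_add S0 S1 dim_amb.
rewrite -(eqP eqS) big_cons big_cons -V0 -V1 addvA.
exact: addvSl.
Qed.


Lemma typeII_key ws : basis_of E ws ->
  forall w, w \in E -> w != 0 -> (Vw w <= \sum_(w <- ws) Vw w)%VS.
Proof.
move=> bws w wE w0.
case: (ltnP 1 (size gs)) => sg.
  by rewrite typeII_sum // typeII_Vw_sub.
suff s1 : size ws = 1%N by exact: (key_single bws s1 wE w0).
rewrite (basis_size bws) -szg; apply/eqP; rewrite eqn_leq sg lt0n.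
apply/negP => /eqP g0; move/negP: w0; apply.
have [c ec] := typeII_repr wE.
rewrite ec big1 ?Pf0 ?eqxx // => i _.
by have := ltn_ord i; rewrite {2}g0.
Qed.

Lemma hat_free k : (k < size gs)%N -> free (us ++ hat gs k).
Proof.
move=> ks; move: frII; rewrite -{1}(cat_take_drop k gs) (drop_nth 0 ks).
by move/free_drop_g.
Qed.

Lemma typeII_cap ws : basis_of E ws -> (1 < size gs)%N ->
  (\bigcap_(w <- ws) Vw w)%VS = <<us>>%VS.
Proof.
move=> bws sg.
apply/eqP; rewrite eqEsubv; apply/andP; split; last first.
  apply/subvP => x xu; rewrite memv_bigcap_seq; apply/allP => w wi.
  have wE : w \in E by rewrite -(span_basis bws) memv_span.
  by apply: (subvP (typeII_us_Vw wE)).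
apply/subvP => v; rewrite -(in_VE_basis _ bws) => vE.
have vk : forall k, (k < size gs)%N -> v \in <<us ++ hat gs k>>%VS.
  move=> k ks; rewrite -(memVw_free v (hat_free ks)); apply: vE.
  rewrite defE; apply: memv_span; apply/mapP; exists k => //.
  by rewrite mem_iota.
suff : forall k, (k <= size gs)%N -> v \in <<us ++ drop k gs>>%VS.
  by move/(_ (size gs) (leqnn _)); rewrite drop_size cats0.
elim => [_|k IH ks].
  have := vk 0%N (ltn_trans (ltn0Sn 0) sg); rewrite drop0 => h.
  apply: (subvP _ _ h); apply: sub_span => x; rewrite /hat take0 /= !mem_cat => /orP [->//|xi].
  by rewrite (mem_drop xi) orbT.
have ks' : (k < size gs)%N by [].
have fr : free (us ++ take k gs ++ nth 0 gs k :: drop k.+1 gs).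
  by rewrite -(drop_nth 0 ks') cat_take_drop.
have := cap_lemma fr => /subvP; apply; rewrite memv_cap; apply/andP; split.
  by rewrite -(drop_nth 0 ks'); apply: IH; apply: ltnW.
exact: vk.
Qed.

End S10.

Unset Implicit Arguments.
Theorem lemma2p5 (F : fieldType) (m l : nat) (E : {vspace ext F m}) :
  (0 < l)%N -> (l <= m)%N -> (E <= extpow F m l)%VS -> close l E ->
  decomposable_sub l E /\
  (forall ws : seq (ext F m), basis_of E ws ->
     (forall v : 'rV[F]_m, in_VE E v <-> v \in (\bigcap_(w <- ws) Vw w)%VS) /\
     (forall v : 'rV[F]_m, in_VuE E v <-> v \in (\sum_(w <- ws) Vw w)%VS) /\
     ((1 < \dim E)%N ->
        (closeI l E ->
           \dim (\bigcap_(w <- ws) Vw w)%VS = l.-1 /\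
           \dim (\sum_(w <- ws) Vw w)%VS = (l + \dim E).-1) /\
        (closeII l E ->
           \dim (\bigcap_(w <- ws) Vw w)%VS = (l.+1 - \dim E)%N /\
           \dim (\sum_(w <- ws) Vw w)%VS = l.+1))).
Proof.
move=> l0 lm _ cl.
have key : forall ws, basis_of E ws ->
    forall w, w \in E -> w != 0 -> (Vw w <= \sum_(w <- ws) Vw w)%VS.
  move=> ws bws w wE w0; case: cl => [[fs [gs [szf szg fr defE]]]|[us [gs [szu szg fr defE]]]].
    have wsn : ws != [::].
      apply/negP => /eqP ws0; move: w0; rewrite -(span_basis bws) in wE.
      by move: wE; rewrite ws0 span_nil memv0 => ->.
    rewrite (typeI_sum fr szf defE bws wsn).
    exact: (typeI_Vw_sub fr szf defE wE w0).
  rewrite -szg in defE szu.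
  exact: (typeII_key fr szu szg defE bws wE w0).
split.
  move=> w wE w0; case: cl => [[fs [gs [szf szg fr defE]]]|[us [gs [szu szg fr defE]]]].
    have [h _ df] := typeI_form fr szf defE wE w0.
    exact: dform_dec l0 df.
  rewrite -szg in defE szu.
  have [hs [lam [df _]]] := typeII_form fr szu szg defE wE w0.
  exact: dform_dec l0 df.
move=> ws bws; split; first by move=> v; apply: in_VE_basis.
split; first by move=> v; apply: in_VuE_basis => //; apply: key.
move=> dE; split.
  case=> fs [gs [szf szg fr defE]].
  have sg : (1 < size gs)%N by rewrite szg.
  have wsn : ws != [::] by apply/negP => /eqP ws0; move: (basis_size bws); rewrite ws0 => e; move: dE; rewrite -e.
  rewrite (typeI_cap fr defE bws sg) (typeI_sum fr szf defE bws wsn).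
  rewrite !free_size ?(catl_free fr) // size_cat -szf -szg /=.
  by [].

case=> us [gs [szu szg fr defE]].
rewrite -szg in defE szu.
have sg : (1 < size gs)%N by rewrite szg.
rewrite (typeII_cap fr szu szg defE bws sg) (typeII_sum fr szu szg defE bws sg).
rewrite (dim_amb fr szu) free_size ?(catl_free fr) // -szu -szg addnK //.
Qed.
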